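(* Let $\mathcal M$ be a complete, connected Riemannian manifold, let $a=(a_1,\dots,a_K)\in\mathbb R^K$ be a weight vector (entries possibly negative) with $\sum_j a_j>0$, and let $r>0$. Then there is $R>0$, depending only on $r$ and $a$, such that for every $x\in\mathcal M$ and every $u=(u_1,\dots,u_K)\in\mathcal M^K$ with all $u_j$ contained in the ball $B(x,r)$, every minimizer $v^\ast$ of $v\mapsto\sum_{j=1}^K a_j\,\mathrm{dist}(v,u_j)^2$ over $v\in\mathcal M$ is contained in the ball $B(x,R)$.
   Context: $\mathrm{dist}$ denotes the Riemannian distance on $\mathcal M$ and $B(x,r)$ the (metric) ball of radius $r$ around $x$. *)

(* Defs.v *)
From Stdlib Require Import Reals.
Open Scope R_scope.

Definition is_metric {T : Type} (d : T -> T -> R) : Prop :=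
  (forall x y, 0 <= d x y) /\
  (forall x y, d x y = 0 <-> x = y) /\
  (forall x y, d x y = d y x) /\
  (forall x y z, d x z <= d x y + d y z).

Definition metric_complete {T : Type} (d : T -> T -> R) : Prop :=
  forall s : nat -> T,
    (forall eps, 0 < eps -> exists N, forall m n, (N <= m)%nat -> (N <= n)%nat ->
        d (s m) (s n) < eps) ->
    exists l, forall eps, 0 < eps -> exists N, forall n, (N <= n)%nat -> d (s n) l < eps.

(* Length space (approximate midpoint characterization; for complete metric
   spaces equivalent to the metric being intrinsic). *)
Definition approx_midpoints {T : Type} (d : T -> T -> R) : Prop :=
  forall x y eps, 0 < eps -> exists z,
    d x z <= d x y / 2 + eps /\ d z y <= d x y / 2 + eps.

Fixpoint sumK (K : nat) (f : nat -> R) : R :=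
  match K with
  | O => 0
  | S k => sumK k f + f k
  end.

Definition wobj {T : Type} (d : T -> T -> R) (K : nat) (a : nat -> R) (u : nat -> T)
  (v : T) : R :=
  sumK K (fun j => a j * (d v (u j))^2).

Definition is_minimizer {T : Type} (d : T -> T -> R) (K : nat) (a : nat -> R)
  (u : nat -> T) (v : T) : Prop :=
  forall w : T, wobj d K a u v <= wobj d K a u w.

(* Main.v *)
Require Import Defs.
From Stdlib Require Import Reals Lra Psatz.
Open Scope R_scope.

Lemma sumK_abs_ge0 K (a : nat -> R) : 0 <= sumK K (fun j => Rabs (a j)).
Proof. induction K; simpl; [lra|]. pose proof (Rabs_pos (a K)); lra. Qed.

Lemma sumK_lower K (a f : nat -> R) (D2 c : R) :
  (forall j, (j < K)%nat -> Rabs (f j - D2) <= c) ->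
  sumK K a * D2 - sumK K (fun j => Rabs (a j)) * c <= sumK K (fun j => a j * f j).
Proof.
  induction K; intros H; simpl; [lra|].
  assert (IH := IHK (fun j Hj => H j (Nat.lt_lt_succ_r _ _ Hj))).
  assert (Hk := H K (Nat.lt_succ_diag_r K)).
  assert (Hb : - c <= f K - D2 <= c).
  { revert Hk; unfold Rabs; destruct (Rcase_abs (f K - D2)); intros; lra. }
  assert (a K * f K >= a K * D2 - Rabs (a K) * c).
  { unfold Rabs; destruct (Rcase_abs (a K)).
    - assert (0 <= (- a K) * (c - (f K - D2))) by (apply Rmult_le_pos; lra). nra.
    - assert (0 <= a K * (f K - D2 + c)) by (apply Rmult_le_pos; lra). nra. }
  lra.
Qed.

Lemma sumK_upper K (a g : nat -> R) (c : R) :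
  (forall j, (j < K)%nat -> 0 <= g j <= c) ->
  sumK K (fun j => a j * g j) <= sumK K (fun j => Rabs (a j)) * c.
Proof.
  induction K; intros H; simpl; [lra|].
  assert (IH := IHK (fun j Hj => H j (Nat.lt_lt_succ_r _ _ Hj))).
  assert (Hk := H K (Nat.lt_succ_diag_r K)).
  assert (a K * g K <= Rabs (a K) * c).
  { unfold Rabs; destruct (Rcase_abs (a K)).
    - assert (0 <= (- a K) * (g K)) by (apply Rmult_le_pos; lra). nra.
    - assert (0 <= a K * (c - g K)) by (apply Rmult_le_pos; lra). nra. }
  lra.
Qed.

Theorem lemma3p2 (K : nat) (a : nat -> R) (r : R) :
  0 < sumK K a -> 0 < r ->
  exists Rad : R, 0 < Rad /\
    forall (T : Type) (d : T -> T -> R),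
      is_metric d -> metric_complete d -> approx_midpoints d ->
      forall (x : T) (u : nat -> T),
        (forall j, (j < K)%nat -> d x (u j) < r) ->
        forall v : T, is_minimizer d K a u v -> d x v < Rad.
Proof.
  intros HA Hr.
  set (A := sumK K a) in *.
  set (B := sumK K (fun j => Rabs (a j))).
  assert (HB : 0 <= B) by apply sumK_abs_ge0.
  set (Q := (2 * B * r + 2 * B * r ^ 2) / A).
  assert (HQ : A * Q = 2 * B * r + 2 * B * r ^ 2) by (unfold Q; field; lra).
  assert (HQ0 : 0 <= Q).
  { unfold Q; apply Rmult_le_pos; [nra|]. left; apply Rinv_0_lt_compat; lra. }
  exists (1 + Q); split; [lra|].
  intros T d [Hpos [Hid [Hsym Htri]]] _ _ x u Hu v Hmin.
  set (D := d x v).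
  assert (HD0 : 0 <= D) by apply Hpos.
  assert (Hlow := sumK_lower K a (fun j => (d v (u j)) ^ 2) (D ^ 2) (2 * D * r + r ^ 2)).
  assert (Hup := sumK_upper K a (fun j => (d x (u j)) ^ 2) (r ^ 2)).
  assert (Hm := Hmin x). unfold wobj in Hm.
  assert (L : sumK K a * D ^ 2 - B * (2 * D * r + r ^ 2) <= B * r ^ 2).
  { eapply Rle_trans; [apply Hlow|]. 
    - intros j Hj. assert (h := Hu j Hj).
      assert (h1 := Htri x (u j) v). rewrite (Hsym (u j) v) in h1. assert (h2 := Htri v x (u j)).
      assert (h3 := Hpos x (u j)). assert (h4 := Hpos v (u j)).
      rewrite (Hsym v x) in h2. fold D in h1, h2.
      set (t := d v (u j) - D).
      replace (d v (u j) ^ 2 - D ^ 2) with (t * (2 * D + t)) by (unfold t; ring).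
      rewrite Rabs_mult. unfold t.
      apply Rle_trans with (r * (2 * D + r)); [|lra].
      apply Rmult_le_compat; try apply Rabs_pos.
      + clear -h h1 h2; clearbody D. unfold Rabs; destruct Rcase_abs; lra.
      + clear -h h1 h2 HD0 h4; clearbody D; unfold Rabs; destruct Rcase_abs; lra.
    - eapply Rle_trans; [apply Hm|]. apply Hup.
      intros j Hj. assert (h := Hu j Hj). assert (h3 := Hpos x (u j)). split; [apply pow2_ge_0|].
      simpl. rewrite !Rmult_1_r. apply Rmult_le_compat; lra. }
  fold A in L.
  destruct (Rlt_dec D 1); [lra|].
  assert (HBr : 0 <= 2 * B * r ^ 2 * (D - 1)) by (apply Rmult_le_pos; [apply Rmult_le_pos; [lra|apply pow2_ge_0]|lra]).
  assert (H1 : D * (A * D) <= D * (A * Q)) by (rewrite HQ; nra).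
  assert (A * D <= A * Q) by (apply (Rmult_le_reg_l D); lra).
  assert (D <= Q) by (apply (Rmult_le_reg_l A); lra).
  lra.
Qed.
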